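(* Fix $\Sigma\in\mathcal{Q}^+_{m,n}$, indices $k,l\in\mathcal{V}_2$ with $k\ge l$, and numbers $\lambda_{hj}\ge0$ for $h,j\in\mathcal{V}_1$, $h\ge j$. Consider $$\min_{\gamma_{kl}\ge0}\ \sum_{h\ge j}\Big[\max\{\gamma_{kl},\lambda_{hj}\}q_{hk,jl}(\Sigma)-\alpha_{hk,jl}\log\max\{\lambda_{hj},\gamma_{kl}\}\Big]+\varepsilon\gamma_{kl}.$$ Let $\tilde\lambda_1<\dots<\tilde\lambda_{\tilde u_1}$ ($\tilde u_1\le m_1(m_1+1)/2$) be the distinct values among $\{\lambda_{hj}:h\ge j\}$ in increasing order, and define $\mathcal{C}_u=\{(h,j):h\ge j,\ \lambda_{hj}\le\tilde\lambda_u\}$, $\mathcal{N}_1=\{\tilde\lambda_u:u=1,\dots,\tilde u_1\}$, $\mathcal{N}_2=\{\tilde\gamma_{kl,u}:u=0,1,\dots,\tilde u_1\}$, where $\tilde\gamma_{kl,0}=0$ and, for $u>0$, $$\tilde\gamma_{kl,u}=\frac{\sum_{(h,j)\in\mathcal{C}_u}\alpha_{hk,jl}}{\sum_{(h,j)\in\mathcal{C}_u}q_{hk,jl}(\Sigma)+\varepsilon}.$$ Then this problem admits a solution and all its points of minimum lie in $\mathcal{M}_2=\mathcal{N}_1\cup\mathcal{N}_2$.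
   Context: Let $m_1,m_2,n\in\mathbb{N}$, $m=m_1m_2$, $\mathcal{V}_1=\{1,\dots,m_1\}$, $\mathcal{V}_2=\{1,\dots,m_2\}$, $\varepsilon>0$. $\mathcal{Q}^+_{m,n}$ is the set of matrix pseudo-polynomials $\Sigma(e^{i\vartheta})=S_0+\frac12\sum_{t=1}^n[S_te^{-it\vartheta}+S_t^Te^{it\vartheta}]$ ($S_0=S_0^T$, $S_t\in\mathbb{R}^{m\times m}$) with $\Sigma(e^{i\vartheta})\succ0$ for all $\vartheta\in[-\pi,\pi]$. For $M\in\mathbb{R}^{m\times m}$, $(M)_{hk,jl}$ is the entry in row $(h-1)m_2+k$ and column $(j-1)m_2+l$. $q_{hk,jl}(\Sigma)=\max_{t=0,\dots,n}\max\{|(S_t)_{hk,jl}|,|(S_t)_{hl,jk}|,|(S_t)_{jl,hk}|,|(S_t)_{jk,hl}|\}$. For $h\ge j$, $k\ge l$: $\alpha_{hk,jl}=n+1$ if $h=j,k=l$; $2n+1$ if $h=j,k>l$ or $h>j,k=l$; $4n+2$ if $h>j,k>l$. The objective is taken to be $+\infty$ if some logarithm has argument $0$. *)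

(* Defs.v *)
From HB Require Import structures.
From mathcomp Require Import all_boot all_order all_algebra.
From mathcomp Require Import all_classical all_reals all_analysis.
From mathcomp Require Import complex.
Set Implicit Arguments. Unset Strict Implicit. Unset Printing Implicit Defensive.
Import Order.TTheory GRing.Theory Num.Theory.
Local Open Scope ring_scope.

Section Defs.
Variables (R : realType) (m1 m2 n : nat).

(* Row/column index "hk" (0-based): (h-1) m2 + k in 1-based = h*m2 + k here *)
Lemma pidx_proof (h : 'I_m1) (k : 'I_m2) : (h * m2 + k < m1 * m2)%N.
Proof.
case: h k => h hlt [k klt] /=.
apply: (@leq_trans (h * m2 + m2)); first by rewrite ltn_add2l.
by rewrite -mulSnr leq_mul2r hlt orbT.
Qed.

Definition pidx (h : 'I_m1) (k : 'I_m2) : 'I_(m1 * m2) :=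
  Ordinal (pidx_proof h k).

(* The coefficients S_0, ..., S_n of the pseudo-polynomial Sigma *)
Definition coeffs := 'I_n.+1 -> 'M[R]_(m1 * m2).

Definition cexpi (x : R) : R[i] := (cos x +i* sin x)%C.

Definition Sigma_at (S : coeffs) (theta : R) : 'M[R[i]]_(m1 * m2) :=
  map_mx (fun x => x%:C%C) (S ord0) +
  (2%:R)^-1 *: \sum_(t < n.+1 | t != ord0)
     (cexpi (- (t%:R * theta)) *: map_mx (fun x => x%:C%C) (S t) +
      cexpi (t%:R * theta) *: map_mx (fun x => x%:C%C) (S t)^T).

Definition in_Qplus (S : coeffs) : Prop :=
  (S ord0)^T = S ord0 /\
  forall theta : R, - pi <= theta <= pi ->
    forall z : 'cV[R[i]]_(m1 * m2), z != 0 ->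
      0 < ((map_mx (@conjc R) z)^T *m Sigma_at S theta *m z) ord0 ord0.

Definition qf (S : coeffs) (h j : 'I_m1) (k l : 'I_m2) : R :=
  \big[Num.max/0]_(t < n.+1)
    Num.max (Num.max `|S t (pidx h k) (pidx j l)| `|S t (pidx h l) (pidx j k)|)
            (Num.max `|S t (pidx j l) (pidx h k)| `|S t (pidx j k) (pidx h l)|).

Definition alpha (h j : 'I_m1) (k l : 'I_m2) : R :=
  if (h == j) && (k == l) then (n + 1)%:R
  else if (h == j) || (k == l) then (2 * n + 1)%:R
  else (4 * n + 2)%:R.

Definition lowpairs :=
  seq.filter (fun p : 'I_m1 * 'I_m1 => (p.2 <= p.1)%N) (enum {: 'I_m1 * 'I_m1}).


Variables (S : coeffs) (k l : 'I_m2) (lam : 'I_m1 -> 'I_m1 -> R) (eps : R).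

Definition objective (g : R) : \bar R :=
  if has (fun p => Num.max (lam p.1 p.2) g == 0) lowpairs then +oo%E
  else ((\sum_(p <- lowpairs)
          (Num.max g (lam p.1 p.2) * qf S p.1 p.2 k l
           - alpha p.1 p.2 k l * ln (Num.max (lam p.1 p.2) g)))
        + eps * g)%:E.

Definition is_minimizer (g : R) : Prop :=
  0 <= g /\ forall g', 0 <= g' -> (objective g <= objective g')%E.

Definition lam_sorted : seq R :=
  sort <=%R (undup [seq lam p.1 p.2 | p <- lowpairs]).
Definition u1 : nat := size lam_sorted.
Definition lamt (u : nat) : R := nth 0 lam_sorted u.-1.
Definition Cset (u : nat) :=
  [seq p <- lowpairs | lam p.1 p.2 <= lamt u].
Definition gamt (u : nat) : R :=
  if u == 0%N then 0
  else (\sum_(p <- Cset u) alpha p.1 p.2 k l) /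
       (\sum_(p <- Cset u) qf S p.1 p.2 k l + eps).
Definition N1 : seq R := [seq lamt u | u <- iota 1 u1].
Definition N2 : seq R := [seq gamt u | u <- iota 0 u1.+1].
Definition M2 : seq R := N1 ++ N2.

End Defs.

(* Main.v *)
Require Import Defs.
From HB Require Import structures.
From mathcomp Require Import all_boot all_order all_algebra.
From mathcomp Require Import all_classical all_reals all_analysis.
From mathcomp Require Import complex.
From mathcomp Require Import lra.
Import Order.TTheory GRing.Theory Num.Theory.
Local Open Scope ring_scope.

Section Generic.
Variable R : realType.

Lemma bigmax_cases (T : eqType) (s : seq T) (P : pred T) (F : T -> R) x0 :
  let M := \big[Num.max/x0]_(i <- s | P i) F i in
  [/\ x0 <= M, (forall i, i \in s -> P i -> F i <= M) &
      (M = x0 \/ exists2 i, i \in s & P i /\ M = F i)].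
Proof.
elim: s => [|a s [IH1 IH2 IH3]] /=; first by rewrite big_nil; split => //; left.
rewrite big_cons; case: ifP => Pa.
  have [h|h] := leP (F a) (\big[Num.max/x0]_(j <- s | P j) F j).
    split => //.
      move=> i; rewrite inE => /orP [/eqP -> _ //|]; exact: IH2.
    case: IH3 => [->|[i hi hPi]]; [by left | by right; exists i => //; rewrite inE hi orbT].
  split.
  - exact: le_trans IH1 (ltW h).
  - move=> i; rewrite inE => /orP [/eqP -> _ //|hi hP].
    exact: le_trans (IH2 i hi hP) (ltW h).
  - by right; exists a => //; rewrite inE eqxx.
split => //.
  move=> i; rewrite inE => /orP [/eqP -> |]; [by rewrite Pa | exact: IH2].
case: IH3 => [->|[i hi hPi]]; [by left | by right; exists i => //; rewrite inE hi orbT].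
Qed.

Lemma bigmin_cases (T : eqType) (s : seq T) (P : pred T) (F : T -> R) x0 :
  let M := \big[Num.min/x0]_(i <- s | P i) F i in
  [/\ M <= x0, (forall i, i \in s -> P i -> M <= F i) &
      (M = x0 \/ exists2 i, i \in s & P i /\ M = F i)].
Proof.
elim: s => [|a s [IH1 IH2 IH3]] /=; first by rewrite big_nil; split => //; left.
rewrite big_cons; case: ifP => Pa.
  have [h|h] := leP (\big[Num.min/x0]_(j <- s | P j) F j) (F a).
    split => //.
      move=> i; rewrite inE => /orP [/eqP -> _ //|]; exact: IH2.
    case: IH3 => [->|[i hi hPi]]; [by left | by right; exists i => //; rewrite inE hi orbT].
  split.
  - exact: le_trans (ltW h) IH1.
  - move=> i; rewrite inE => /orP [/eqP -> _ //|hi hP].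
    exact: le_trans (ltW h) (IH2 i hi hP).
  - by right; exists a => //; rewrite inE eqxx.
split => //.
  move=> i; rewrite inE => /orP [/eqP -> |]; [by rewrite Pa | exact: IH2].
case: IH3 => [->|[i hi hPi]]; [by left | by right; exists i => //; rewrite inE hi orbT].
Qed.

Lemma sum_pos (T : Type) (s : seq T) (P : pred T) (F : T -> R) :
  (forall i, 0 < F i) -> has P s -> 0 < \sum_(i <- s | P i) F i.
Proof.
move=> hF; elim: s => [//|a s IH] /=; rewrite big_cons.
case: ifP => Pa /=.
  move=> _; apply: ltr_pwDl; first exact: hF.
  by apply: sumr_ge0 => i _; apply: ltW.
exact: IH.
Qed.

Lemma ln_strict (x y : R) : 0 < x -> 0 < y -> x != y -> ln y - ln x < y / x - 1.
Proof.
move=> hx hy hxy.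
have hz : 0 < y / x by rewrite divr_gt0.
have e : ln (y / x) = ln y - ln x by rewrite ln_div ?posrE.
have hz1 : y / x != 1.
  apply/eqP => h; move: hxy; have := divfK (lt0r_neq0 hx) y.
  by rewrite h mul1r => ->; rewrite eqxx.
have ht : ln (y / x) != 0 by rewrite ln_eq0.
have := expR_gt1Dx ht; rewrite lnK ?posrE // -e; lra.
Qed.

Definition phi (A B x : R) := B * x - A * ln x.

Lemma phi_inc (A B x y : R) : 0 <= A -> 0 < B -> A / B <= x -> x < y -> 0 <= x ->
  phi A B x < phi A B y.
Proof.
move=> hA hB hx hxy hx0; rewrite /phi.
have [->|hA0] := eqVneq A 0.
  rewrite !mul0r !subr0; by rewrite ltr_pM2l.
have hAp : 0 < A by rewrite lt_neqAle eq_sym hA0 hA.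
have hxp : 0 < x by apply: lt_le_trans hx; rewrite divr_gt0.
have hL := ln_strict x y hxp (lt_trans hxp hxy) (negbT (lt_eqF hxy)).
have hL' : (ln y - ln x) * x < y - x.
  have := ltr_pM2r hxp; move=> h; rewrite -[X in _ < X](_ : (y / x - 1) * x = y - x).
    by rewrite h.
  by rewrite mulrBl divfK ?lt0r_neq0 // mul1r.
have hAx : A <= B * x by rewrite mulrC -ler_pdivrMr.
move: hL' hAx; set ly := ln y; set lx := ln x => hL' hAx.
nra.
Qed.

Lemma phi_dec (A B x y : R) : 0 < B -> 0 < x -> x < y -> y <= A / B ->
  phi A B y < phi A B x.
Proof.
move=> hB hx hxy hy; rewrite /phi.
have hyp : 0 < y := lt_trans hx hxy.
have hAy : B * y <= A by rewrite mulrC -ler_pdivlMr.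
have hAp : 0 < A by apply: lt_le_trans hAy; rewrite mulr_gt0.
have hL := ln_strict y x hyp hx (negbT (gt_eqF hxy)).
have hL' : (ln x - ln y) * y < x - y.
  have := ltr_pM2r hyp; move=> h; rewrite -[X in _ < X](_ : (x / y - 1) * y = x - y).
    by rewrite h.
  by rewrite mulrBl divfK ?lt0r_neq0 // mul1r.
move: hL' hAy; set ly := ln y; set lx := ln x => hL' hAy.
nra.
Qed.

End Generic.
Arguments phi {R}.
Arguments phi_inc {R}.
Arguments phi_dec {R}.
Arguments bigmax_cases {R T}.
Arguments bigmin_cases {R T}.

Section Main.
Variables (R : realType) (m1 m2 n : nat) (S : coeffs R m1 m2 n) (k l : 'I_m2)
  (lam : 'I_m1 -> 'I_m1 -> R) (eps : R).
Hypothesis hlam : forall p, p \in lowpairs m1 -> 0 <= lam p.1 p.2.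
Hypothesis heps : 0 < eps.

Local Notation s := (lowpairs m1).
Local Notation lp p := (lam p.1 p.2).
Local Notation qq p := (qf S p.1 p.2 k l).
Local Notation al p := (alpha R n p.1 p.2 k l).
Local Notation f := (objective S k l lam eps).
Local Notation MM := (M2 S k l lam eps).

Lemma al_gt0 (p : 'I_m1 * 'I_m1) : 0 < al p.
Proof. rewrite /alpha; case: ifP => _; [|case: ifP => _]; rewrite ltr0n ?addn1 ?addn2 //. Qed.

Lemma qq_ge0 (p : 'I_m1 * 'I_m1) : 0 <= qq p.
Proof.
rewrite /qf; elim/big_ind: _ => //; first by move=> x y hx hy; rewrite le_max hx.
Qed.

Definition AA (P : pred ('I_m1 * 'I_m1)) := \sum_(p <- s | P p) al p.
Definition BB (P : pred ('I_m1 * 'I_m1)) := \sum_(p <- s | P p) qq p + eps.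
Definition KK (P : pred ('I_m1 * 'I_m1)) :=
  \sum_(p <- s | ~~ P p) (lp p * qq p - al p * ln (lp p)).

Lemma obj_val (P : pred ('I_m1 * 'I_m1)) x :
  (forall p, p \in s -> (P p -> lp p <= x) /\ (~~ P p -> x <= lp p)) ->
  (forall p, p \in s -> Num.max (lp p) x != 0) ->
  f x = (phi (AA P) (BB P) x + KK P)%:E.
Proof.
move=> hpart hfin; rewrite /objective.
have -> : has (fun p => Num.max (lp p) x == 0) s = false.
  by apply/negbTE/hasPn => p hp; apply: hfin.
congr EFin.
rewrite (bigID P) /= big_seq_cond [X in _ + X + _]big_seq_cond.
rewrite (eq_bigr (fun p => x * qq p - al p * ln x)); last first.
  move=> p /andP [hp hP]; have [h _] := hpart p hp.
  by rewrite max_l ?(h hP) // max_r ?(h hP).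
rewrite [X in _ + X + _](eq_bigr (fun p => lp p * qq p - al p * ln (lp p))); last first.
  move=> p /andP [hp hP]; have [_ h] := hpart p hp.
  by rewrite max_r ?(h hP) // max_l ?(h hP).
rewrite -big_seq_cond -[X in _ + X + _]big_seq_cond.
rewrite big_split /= sumrN -mulr_sumr -mulr_suml.
rewrite /phi /AA /BB /KK; lra.
Qed.

Lemma lam_in_M2 (p : 'I_m1 * 'I_m1) : p \in s -> lp p \in MM.
Proof.
move=> hp.
have hin : lp p \in lam_sorted lam.
  by rewrite /lam_sorted mem_sort mem_undup; apply: (map_f (fun p => lp p)).
rewrite /M2 mem_cat; apply/orP; left.
apply/mapP; exists (index (lp p) (lam_sorted lam)).+1.
  by rewrite mem_iota /= add1n /u1 ltnS index_mem hin.
by rewrite /lamt /= nth_index.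
Qed.

Lemma gam_in_M2 g : AA (fun p => lp p < g) / BB (fun p => lp p < g) \in MM.
Proof.
rewrite /M2 mem_cat; apply/orP; right.
have [hP|hP] := boolP (has (fun p => lp p < g) s); last first.
  apply/mapP; exists 0%N; first by rewrite mem_iota.
  by rewrite /gamt /= /AA big_hasC // mul0r.
move/hasP: hP => [p0 hp0 hP0].
have [_ hub hcase] := bigmax_cases s (fun p => lp p < g) (fun p => lp p) (lp p0).
set a := \big[Num.max/lp p0]_(i <- s | lp i < g) lp i in hub hcase.
have [q hq [hPq haq]] : exists2 q, q \in s & lp q < g /\ a = lp q.
  by case: hcase => [->|[i hi hh]]; [exists p0 | exists i].
have hin : a \in lam_sorted lam.
  by rewrite haq /lam_sorted mem_sort mem_undup; apply: (map_f (fun p => lp p)).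
apply/mapP; exists (index a (lam_sorted lam)).+1.
  by rewrite mem_iota add0n ltnS /u1 index_mem hin.
have hC : Cset lam (index a (lam_sorted lam)).+1 = [seq p <- s | lp p < g].
  rewrite /Cset /lamt /= nth_index //; apply: eq_in_filter => p hp.
  apply/idP/idP => h; first by apply: le_lt_trans h _; rewrite haq.
  exact: hub.
by rewrite /gamt /= hC !big_filter.
Qed.

Lemma max_neq0 (a b : R) : 0 <= a -> 0 <= b -> a != b -> Num.max a b != 0.
Proof.
move=> ha hb hab; apply/eqP => h.
have h1 : a <= 0 by rewrite -h le_max lexx.
have h2 : b <= 0 by rewrite -h le_max lexx orbT.
by move: hab; rewrite (@le_anti _ _ a 0) ?h1 ?ha // (@le_anti _ _ b 0) ?h2 ?hb // eqxx.
Qed.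

Lemma KL (g : R) : 0 <= g -> g \notin MM ->
  exists c, [/\ 0 <= c, c \in MM & (f c < f g)%E].
Proof.
move=> hg0 hgM.
have hne : forall p, p \in s -> lp p != g.
  move=> p hp; apply/eqP => e; move: hgM; rewrite -e lam_in_M2 //.
pose P := fun p : 'I_m1 * 'I_m1 => lp p < g.
have hA0 : 0 <= AA P by apply: sumr_ge0 => p _; apply: ltW; apply: al_gt0.
have hB : 0 < BB P.
  by rewrite /BB; apply: ltr_wpDl => //; apply: sumr_ge0 => p _; apply: qq_ge0.
have hgam0 : 0 <= AA P / BB P by rewrite divr_ge0 // ltW.
have hgamM : AA P / BB P \in MM := gam_in_M2 g.
have hgneq : g != AA P / BB P by apply/eqP => e; move: hgM; rewrite e hgamM.
have hApos : has P s -> 0 < AA P.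
  by move=> h; apply: sum_pos => // p; apply: al_gt0.
have hfing : forall p, p \in s -> Num.max (lp p) g != 0.
  by move=> p hp; apply: max_neq0 => //; [exact: hlam | exact: hne].
have hpartg : forall p, p \in s -> (P p -> lp p <= g) /\ (~~ P p -> g <= lp p).
  by move=> p hp; split; [move=> h; apply: ltW | rewrite /P -leNgt].
have hfg := obj_val P g hpartg hfing.
have [hlt|hlt] := boolP (g < AA P / BB P).
  have hApos' : 0 < AA P.
    have hgp : 0 < AA P / BB P := le_lt_trans hg0 hlt.
    by have := mulr_gt0 hgp hB; rewrite divfK ?lt0r_neq0.
  have hAP : has P s.
    apply/negPn/negP => hn; move: hApos'; by rewrite /AA big_hasC // ltxx.
  have hgp : 0 < g.
    move/hasP: hAP => [p hp hPp]; exact: le_lt_trans (hlam p hp) hPp.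
  have [hb1 hb2 hb3] := bigmin_cases s (fun p => g < lp p) (fun p => lp p) (AA P / BB P).
  set b := \big[Num.min/AA P / BB P]_(i <- s | g < lp i) lp i in hb1 hb2 hb3.
  have hgb : g < b by case: hb3 => [->|[i hi [hh ->]]].
  have hbM : b \in MM by case: hb3 => [->|[i hi [hh ->]]] //; apply: lam_in_M2.
  have hpartb : forall p, p \in s -> (P p -> lp p <= b) /\ (~~ P p -> b <= lp p).
    move=> p hp; split => h; first by apply: ltW; apply: lt_trans h hgb.
    apply: hb2 => //; rewrite lt_neqAle eq_sym hne // andTb.
    by move: h; rewrite /P -leNgt.
  have hfinb : forall p, p \in s -> Num.max (lp p) b != 0.
    move=> p hp; apply: lt0r_neq0; apply: lt_le_trans (lt_trans hgp hgb) _.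
    by rewrite le_max lexx orbT.
  exists b; split => //; first exact: ltW (le_lt_trans hg0 hgb).
  rewrite (obj_val P b hpartb hfinb) hfg lte_fin ltrD2r.
  exact: phi_dec hB hgp hgb hb1.
have hlt' : AA P / BB P < g.
  by move: (lt_total hgneq); rewrite (negbTE hlt).
have [ha1 ha2 ha3] := bigmax_cases s P (fun p => lp p) (AA P / BB P).
set a := \big[Num.max/AA P / BB P]_(i <- s | P i) lp i in ha1 ha2 ha3.
have hag : a < g by case: ha3 => [->|[i hi [hh ->]]].
have haM : a \in MM by case: ha3 => [->|[i hi [hh ->]]] //; apply: lam_in_M2.
have ha0 : 0 <= a := le_trans hgam0 ha1.
have hgp : 0 < g := le_lt_trans hgam0 hlt'.
have hparta : forall p, p \in s -> (P p -> lp p <= a) /\ (~~ P p -> a <= lp p).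
  move=> p hp; split => h; first exact: ha2.
  by apply: le_trans (ltW hag) _; move: h; rewrite /P -leNgt.
have hfina : forall p, p \in s -> Num.max (lp p) a != 0.
  move=> p hp; apply: lt0r_neq0.
  have [hPp|hPp] := boolP (P p).
    have hgp' : 0 < AA P / BB P by rewrite divr_gt0 // hApos //; apply/hasP; exists p.
    by apply: lt_le_trans (lt_le_trans hgp' ha1) _; rewrite le_max lexx orbT.
  apply: lt_le_trans (hgp) _; apply: le_trans (_ : lp p <= _); last by rewrite le_max lexx.
  by move: hPp; rewrite /P -leNgt.
exists a; split => //.
rewrite (obj_val P a hparta hfina) hfg lte_fin ltrD2r.
exact: phi_inc hA0 hB ha1 hag ha0.
Qed.

End Main.

Lemma argmin_seq (R : realType) (F : R -> \bar R) (s : seq R) x0 :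
  x0 \in s -> exists2 c, c \in s & forall d, d \in s -> (F c <= F d)%E.
Proof.
elim: s x0 => [//|a s IH] x0 _.
case: s IH => [|b s] IH.
  by exists a; rewrite ?mem_head // => d; rewrite inE => /eqP ->.
have [c hc hmin] := IH b (mem_head b s).
have /orP [h|h] := le_total (F a) (F c).
  exists a; first exact: mem_head.
  move=> d; rewrite inE => /orP [/eqP -> //|hd]; exact: le_trans h (hmin d hd).
exists c; first by rewrite inE hc orbT.
by move=> d; rewrite inE => /orP [/eqP -> //|hd]; exact: hmin.
Qed.

Theorem proposition6 (R : realType) (m1 m2 n : nat)
    (S : coeffs R m1 m2 n) (hS : in_Qplus S)
    (k l : 'I_m2) (hkl : (l <= k)%N)
    (lam : 'I_m1 -> 'I_m1 -> R)
    (hlam : forall h j : 'I_m1, (j <= h)%N -> 0 <= lam h j)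
    (eps : R) (heps : 0 < eps) :
  (exists g : R, is_minimizer S k l lam eps g) /\
  (forall g : R, is_minimizer S k l lam eps g -> g \in M2 S k l lam eps).
Proof.
have hlam' : forall p, p \in lowpairs m1 -> 0 <= lam p.1 p.2.
  by move=> p; rewrite /lowpairs mem_filter => /andP [h _]; apply: hlam.
have KL' := @KL R m1 m2 n S k l lam eps hlam' heps.
split.
  have h0 : 0 \in [seq x <- M2 S k l lam eps | 0 <= x].
    rewrite mem_filter lexx /= /M2 mem_cat; apply/orP; right.
    by apply/mapP; exists 0%N; rewrite ?mem_iota.
  have [c hc hmin] := @argmin_seq R (objective S k l lam eps) _ _ h0.
  move: hc; rewrite mem_filter => /andP [hc0 hcM].
  exists c; split => // g' hg'.
  have [hg'M|hg'M] := boolP (g' \in M2 S k l lam eps).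
    by apply: hmin; rewrite mem_filter hg' hg'M.
  have [c' [hc'0 hc'M hlt]] := KL' g' hg' hg'M.
  apply: le_trans (ltW hlt); apply: hmin; by rewrite mem_filter hc'0 hc'M.
move=> g [hg0 hmin].
have [//|hgM] := boolP (g \in M2 S k l lam eps).
have [c [hc0 _ hlt]] := KL' g hg0 hgM.
by move: (hmin c hc0); rewrite leNgt hlt.
Qed.
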